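(* Let $A$ be a circular $m\times n$ matrix with no dominating rows, and let $\Gamma$ be a circuit of $F(A)$ with winding number $p$ and $s$ essential bullets $1\le b_1<b_2<\dots<b_s\le n$. Then $\Gamma$ has exactly $s$ row arcs, and each row arc of $\Gamma$ jumps over exactly $p$ essential bullets of $\Gamma$, i.e., it has the form $(B_i^-,B_{i+p}^+)$ for some $i\in[s]$ (block indices modulo $s$). Moreover, $\gcd(s,p)=1$.
   Context: Notation: $[n]=\{1,\dots,n\}$ with addition mod $n$ (index $0$ identified with $n$); for $a,c\in[n]$ with $t\ge0$ minimal such that $a+t\equiv c\pmod n$, $[a,c]_n=\{a,\dots,a+t\}$ (mod $n$), $[a,c)_n=[a,c]_n\setminus\{c\}$. An $m\times n$ $\{0,1\}$-matrix $A=(a_{ij})$ is circular if for each row $i$ there are $\ell_i\in[n]$ and an integer $2\le k_i\le n-1$ with row $i$ the incidence vector of $[\ell_i,\ell_i+k_i)_n$. Row $i$ dominates row $\ell\ne i$ if $a_{ij}\ge a_{\ell j}$ for all $j$. $F(A)$: digraph on $[n]$ (labels mod $n$) with row arcs $a_i=(\ell_i-1,\ell_i+k_i-1)$ ($i\in[m]$, length $k_i$), forward short arcs $(j-1,j)$ (length $1$), reverse short arcs $(j,j-1)$ (length $-1$). A circuit is a simple directed circuit; winding number $p(\Gamma)$: $p(\Gamma)n=$ sum of its arc lengths. A row arc $a_i$ jumps over $j$ iff $j\in[\ell_i,\ell_i+k_i)_n$. For a circuit $\Gamma$: $\circ(\Gamma)=\{j:(j-1,j)\in E(\Gamma)\}$,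 $\otimes(\Gamma)=\{j:(j,j-1)\in E(\Gamma)\}$, $\bullet(\Gamma)=[n]\setminus(\circ(\Gamma)\cup\otimes(\Gamma))$; essential bullets are bullets that are nodes of $\Gamma$. Blocks: with essential bullets $b_1<\dots<b_s$ (indices mod $s$), for $j\in[s]$ define $v_j\in[b_j,b_{j+1})_n$: if $b_j+1\in\circ(\Gamma)$, $v_j$ is such that $[b_j+1,v_j]_n\subseteq\circ(\Gamma)$ and $v_j+1\notin\circ(\Gamma)$; if $b_j+1\in\otimes(\Gamma)$, $[b_j+1,v_j]_n\subseteq\otimes(\Gamma)$ and $v_j+1\notin\otimes(\Gamma)$; if $b_j+1\in\bullet(\Gamma)$, $v_j=b_j$. $B_j=[b_j,v_j]_n$ is a circle/cross/bullet block according as $b_j+1$ is a circle/cross/bullet. Set $B_j^-=b_j$, $B_j^+=v_j$ for a cross block; $B_j^-=v_j$, $B_j^+=b_j$ for a circle block; $B_j^-=B_j^+=b_j$ for a bullet block. *)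

(* Defs.v *)
From mathcomp Require Import all_boot all_order all_algebra.
Set Implicit Arguments. Unset Strict Implicit. Unset Printing Implicit Defensive.
Import GRing.Theory Num.Theory.

(* Conventions: the labels [n] = {1,...,n} (mod n) are represented by the
   ordinals 'I_n, label x corresponding to the ordinal (x mod n); in
   particular label n is the ordinal 0.  Columns of the matrix use the same
   identification. *)

Definition nadd n (a : 'I_n) (t : nat) : 'I_n :=
  Ordinal (ltn_pmod (a + t) (leq_ltn_trans (leq0n a) (ltn_ord a))).
Definition nsucc n (a : 'I_n) : 'I_n := nadd a 1.
Definition npred n (a : 'I_n) : 'I_n := nadd a n.-1.

(* [a, c]_n : { a, ..., a + t } with t minimal such that a + t = c mod n *)
Definition cint_cc n (a c j : 'I_n) : bool :=
  (j + n - a) %% n <= (c + n - a) %% n.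
Definition cint_co n (a c j : 'I_n) : bool := cint_cc a c j && (j != c).

Definition dominates m n (A : 'M[nat]_(m, n)) (i i' : 'I_m) : Prop :=
  forall j, A i' j <= A i j.

(* arcs of F(A): inl i = row arc a_i ; inr (inl j) = forward short arc
   (j-1, j) ; inr (inr j) = reverse short arc (j, j-1). *)
Definition arcT m n := ('I_m + ('I_n + 'I_n))%type.
Definition rowA m n (i : 'I_m) : arcT m n := inl i.
Definition fwdA m n (j : 'I_n) : arcT m n := inr (inl j).
Definition revA m n (j : 'I_n) : arcT m n := inr (inr j).

Section F.
Variables (m n : nat) (l : 'I_m -> 'I_n) (k : 'I_m -> nat).

Definition atail (e : arcT m n) : 'I_n :=
  match e with
  | inl i => npred (l i)
  | inr (inl j) => npred j
  | inr (inr j) => j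
  end.
Definition ahead (e : arcT m n) : 'I_n :=
  match e with
  | inl i => npred (nadd (l i) (k i))
  | inr (inl j) => j
  | inr (inr j) => npred j
  end.
Definition alen (e : arcT m n) : int :=
  match e with
  | inl i => (k i)%:Z
  | inr (inl _) => 1%R
  | inr (inr _) => (-1)%R
  end.
Definition is_row (e : arcT m n) : bool := if e is inl _ then true else false.

Definition is_circuit (c : seq (arcT m n)) : bool :=
  [&& c != [::], cycle (fun e f => ahead e == atail f) c & uniq (map atail c)].

Definition jumps (i : 'I_m) (j : 'I_n) : bool := cint_co (l i) (nadd (l i) (k i)) j.

Variable c : seq (arcT m n).

Definition circ (j : 'I_n) : bool := fwdA m j \in c.
Definition cross (j : 'I_n) : bool := revA m j \in c.
Definition bullet (j : 'I_n) : bool := ~~ circ j && ~~ cross j.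
Definition essential (j : 'I_n) : bool := bullet j && (j \in map atail c).

(* essential bullets b_1 < ... < b_s in label order 1 < 2 < ... < n *)
Definition ebul : seq 'I_n := [seq j <- rot 1 (enum 'I_n) | essential j].
Definition nbul : nat := size ebul.

(* v such that [b+1, v] is a maximal run of P starting at b+1 *)
Definition run_end (P : pred 'I_n) (b : 'I_n) : 'I_n :=
  nadd b (1 + find (fun u => ~~ P (nadd b u.+2)) (iota 0 n)).
Definition blockV (b : 'I_n) : 'I_n :=
  if circ (nsucc b) then run_end circ b
  else if cross (nsucc b) then run_end cross b
  else b.
Definition Bminus (b : 'I_n) : 'I_n := if circ (nsucc b) then blockV b else b.
Definition Bplus (b : 'I_n) : 'I_n := if circ (nsucc b) then b else blockV b.

End F.

(* Main.v *)
Require Import Defs.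
From mathcomp Require Import all_boot all_order all_algebra zify.
Import GRing.Theory Num.Theory.
Set Implicit Arguments. Unset Strict Implicit. Unset Printing Implicit Defensive.

Section Cyc.
Variable n : nat.
Implicit Types a b t : 'I_n.

Lemma ngt0 a : 0 < n.
Proof. by case: a => /= a Ha; lia. Qed.

Definition dist a b : nat := (b + n - a) %% n.

Lemma nadd_val a d : val (nadd a d) = (a + d) %% n.
Proof. by []. Qed.

Lemma dist_lt a b : dist a b < n.
Proof. by rewrite /dist ltn_mod (ngt0 a). Qed.

Lemma naddA a d1 d2 : nadd (nadd a d1) d2 = nadd a (d1 + d2).
Proof. apply: val_inj => /=; by rewrite modnDml addnA. Qed.

Lemma nadd0 a : nadd a 0 = a.
Proof. apply: val_inj => /=; by rewrite addn0 modn_small. Qed.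

Lemma naddn a : nadd a n = a.
Proof. apply: val_inj => /=; by rewrite modnDr modn_small. Qed.

Lemma nadd_mod a d : nadd a (d %% n) = nadd a d.
Proof. apply: val_inj => /=; by rewrite modnDmr. Qed.

Lemma nadd_dist a b : nadd a (dist a b) = b.
Proof.
apply: val_inj => /=; rewrite /dist modnDmr.
have Ha := ltn_ord a; have Hb := ltn_ord b.
by rewrite addnC subnK ?modnDr ?modn_small //; lia.
Qed.

Lemma dist_nadd a d : dist a (nadd a d) = d %% n.
Proof.
rewrite /dist /=. have Ha := ltn_ord a.
rewrite -addnBA; last lia.
rewrite modnDml.
have -> : a + d + (n - a) = d + n by lia.
by rewrite modnDr.
Qed.

Lemma dist_naddE a b d : d < n -> (b == nadd a d) = (dist a b == d).
Proof.
move=> Hd; apply/eqP/eqP => [->|<-]; first by rewrite dist_nadd modn_small.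
by rewrite nadd_dist.
Qed.

Lemma dist_aa a : dist a a = 0.
Proof. by rewrite -{2}(nadd0 a) dist_nadd mod0n. Qed.

Lemma dist_tri a b t : dist a t = (dist a b + dist b t) %% n.
Proof.
have E : t = nadd a (dist a b + dist b t) by rewrite -naddA !nadd_dist.
by rewrite {1}E dist_nadd.
Qed.

Lemma dist_tri2 a b t : dist a t = dist a b + dist b t \/ dist a t + n = dist a b + dist b t.
Proof.
rewrite (dist_tri a b t). have H1 := dist_lt a b; have H2 := dist_lt b t.
case: (ltnP (dist a b + dist b t) n) => H.
  by left; rewrite modn_small.
right. have -> : dist a b + dist b t = (dist a b + dist b t - n) + n by lia.
rewrite modnDr modn_small; lia.
Qed.

Lemma nadd_inj a : injective (fun d : 'I_n => nadd a d).
Proof.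
move=> d1 d2 /(congr1 (dist a)); rewrite !dist_nadd !modn_small //.
by move/val_inj.
Qed.

Lemma nsuccE a : nsucc a = nadd a 1. Proof. by []. Qed.
Lemma npredE a : npred a = nadd a n.-1. Proof. by []. Qed.

Lemma npred_succ a : npred (nsucc a) = a.
Proof. rewrite npredE nsuccE naddA. have := ngt0 a. move=> H; have -> : 1 + n.-1 = n by lia. by rewrite naddn. Qed.
Lemma nsucc_pred a : nsucc (npred a) = a.
Proof. rewrite npredE nsuccE naddA. have := ngt0 a. move=> H; have -> : n.-1 + 1 = n by lia. by rewrite naddn. Qed.

Lemma npred_eq a b : (npred a == b) = (a == nsucc b).
Proof.
apply/eqP/eqP => [<-|->]; by rewrite ?nsucc_pred ?npred_succ.
Qed.

Lemma dist_succ a t : dist a (nsucc t) = (dist a t).+1 %% n.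
Proof. by rewrite -{1}(nadd_dist a t) nsuccE naddA dist_nadd addn1. Qed.

Lemma cint_coE a kk t : kk < n -> cint_co a (nadd a kk) t = (dist a t < kk).
Proof.
move=> Hk; rewrite /cint_co /cint_cc.
have -> : (t + n - a) %% n = dist a t by [].
have -> : ((nadd a kk) + n - a) %% n = dist a (nadd a kk) by [].
rewrite dist_nadd modn_small // (dist_naddE _ _ Hk).
by rewrite ltn_neqAle andbC.
Qed.

Lemma sum_reindex a (G : 'I_n -> nat) : \sum_(t : 'I_n) G t = \sum_(d < n) G (nadd a d).
Proof. by rewrite (reindex_inj (nadd_inj (a:=a))). Qed.

Lemma sum_reindexz a (G : 'I_n -> int) : (\sum_(t : 'I_n) G t = \sum_(d < n) G (nadd a d))%R.
Proof. by rewrite (reindex_inj (nadd_inj (a:=a))). Qed.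

End Cyc.

Lemma count_add3 (T : Type) (P P1 P2 P3 : pred T) (s : seq T) :
  (forall x, P x = P1 x + P2 x + P3 x :> nat) ->
  count P s = count P1 s + count P2 s + count P3 s.
Proof. move=> H; elim: s => //= x s ->; rewrite H; lia. Qed.

Lemma count_add2eq (T : Type) (P Q P' Q' : pred T) (s : seq T) :
  (forall x, P x + Q x = P' x + Q' x :> nat) ->
  count P s + count Q s = count P' s + count Q' s.
Proof. move=> H; elim: s => //= x s IH; have := H x; lia. Qed.

Lemma path_heads (T : Type) (R : T -> T -> bool) (hd tl : T -> nat) : True.
Proof. by []. Qed.

Section Circ.
Variables (m n : nat) (l : 'I_m -> 'I_n) (k : 'I_m -> nat).
Hypothesis Hk : forall i, 2 <= k i <= n.-1.
Variable c : seq (arcT m n).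
Hypothesis Hc : is_circuit l k c.
Hypothesis Hnodigon : forall j, ~~ (circ c j && cross c j).

Local Notation atl := (atail l).
Local Notation ahd := (ahead l k).

Definition Nd (t : 'I_n) : bool := t \in map atl c.
Definition rowtail (t : 'I_n) : nat := count (fun e => is_row e && (atl e == t)) c.
Definition rowhead (t : 'I_n) : nat := count (fun e => is_row e && (ahd e == t)) c.
Local Notation ess := (essential l c).

Lemma c_neq0 : c != [::].
Proof. by case/and3P: Hc. Qed.

Lemma uniq_tails : uniq (map atl c).
Proof. by case/and3P: Hc. Qed.

Lemma uniq_c : uniq c.
Proof. exact: map_uniq uniq_tails. Qed.

Lemma belast_heads x q : path (fun e f => ahd e == atl f) x q ->
  map ahd (belast x q) = map atl q.
Proof.
elim: q x => //= y q IH x /andP [/eqP -> Hp]. by rewrite IH.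
Qed.

Lemma heads_rot : map ahd c = rot 1 (map atl c).
Proof.
case/and3P: Hc; case: c => // x q _ Hcy _.
rewrite /cycle in Hcy. have := belast_heads Hcy.
rewrite belast_rcons => ->. by rewrite map_rcons /= rot1_cons.
Qed.

Lemma perm_heads : perm_eq (map ahd c) (map atl c).
Proof. by rewrite heads_rot perm_rot. Qed.

Lemma countT t : count (fun e => atl e == t) c = Nd t.
Proof.
rewrite /Nd -(count_uniq_mem _ uniq_tails) count_map.
by apply: eq_count => e /=; rewrite eq_sym.
Qed.

Lemma countH t : count (fun e => ahd e == t) c = Nd t.
Proof.
rewrite /Nd -(count_uniq_mem _ uniq_tails) -(permP perm_heads) count_map.
by apply: eq_count => e /=; rewrite eq_sym.
Qed.

Lemma count_mem1 (e : arcT m n) : count (pred1 e) c = (e \in c).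
Proof. exact: count_uniq_mem uniq_c. Qed.

Lemma balT t : Nd t = circ c (nsucc t) + cross c t + rowtail t :> nat.
Proof.
rewrite -countT /circ /cross -!count_mem1 /rowtail.
apply: count_add3 => -[i|[j|j]] /=.
- by [].
- rewrite /fwdA /revA /=. rewrite npred_eq.
  case: (j =P nsucc t) => [->|H]; rewrite ?eqxx //.
  by case: eqP => // -[].
- rewrite /fwdA /revA /=.
  case: (j =P t) => [->|H]; rewrite ?eqxx //.
  by case: eqP => // -[].
Qed.

Lemma balH t : Nd t = circ c t + cross c (nsucc t) + rowhead t :> nat.
Proof.
rewrite -countH /circ /cross -!count_mem1 /rowhead.
apply: count_add3 => -[i|[j|j]] /=.
- by [].
- rewrite /fwdA /revA /=.
  case: (j =P t) => [->|H]; rewrite ?eqxx //.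
  by case: eqP => // -[].
- rewrite /fwdA /revA /=. rewrite npred_eq.
  case: (j =P nsucc t) => [->|H]; rewrite ?eqxx //.
  by case: eqP => // -[].
Qed.

Lemma essN t : ess t + circ c t + cross c t = Nd t :> nat.
Proof.
have H1 := balT t; have H2 := balH t; have H3 := Hnodigon t.
rewrite /essential /bullet -/(Nd t).
move: H1 H2 H3; case: (circ c t); case: (cross c t); case: (Nd t) => //=; lia.
Qed.

Lemma T1 t : circ c (nsucc t) + rowtail t = ess t + circ c t :> nat.
Proof. have := balT t; have := essN t; lia. Qed.

Lemma T2 t : cross c (nsucc t) + rowhead t = ess t + cross c t :> nat.
Proof. have := balH t; have := essN t; lia. Qed.

End Circ.

Lemma count_sumE (T : Type) (P : pred T) (s : seq T) : count P s = \sum_(x <- s) P x.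
Proof. elim: s => [|x s IH]; by rewrite ?big_nil ?big_cons //= IH. Qed.

Section Win.
Variable n : nat.

Lemma tele (f g h : 'I_n -> nat) :
  (forall t, f (nsucc t) + g t = h t + f t) ->
  forall a K, f (nadd a K) + \sum_(d < K) g (nadd a d) = \sum_(d < K) h (nadd a d) + f a.
Proof.
move=> H a; elim=> [|K IH]; first by rewrite !big_ord0 nadd0 addn0.
rewrite (big_ord_recr K (fun d => g (nadd a d))) (big_ord_recr K (fun d => h (nadd a d))) /=.
move: IH.
set S1 := \sum_(d < K) g (nadd a d). set S2 := \sum_(d < K) h (nadd a d).
move=> IH.
have E : nadd a K.+1 = nsucc (nadd a K) by rewrite nsuccE naddA addn1.
have := H (nadd a K). rewrite -E. lia.
Qed.

Lemma sum_lt_const (kk : nat) : kk <= n -> \sum_(d < n) ((d < kk) : nat) = kk.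
Proof.
move=> Hk. rewrite -big_mkcond /= -(big_ord_widen n (fun _ => 1)) //.
by rewrite sum1_card card_ord.
Qed.

Lemma sum_win_cond (kk : nat) (G : nat -> nat) : kk <= n ->
  \sum_(d < n) (if d < kk then G d else 0) = \sum_(d < kk) G d.
Proof. move=> Hk. by rewrite -big_mkcond /= -(big_ord_widen n G). Qed.

Lemma card_win (a : 'I_n) (P : pred 'I_n) (kk : nat) : kk <= n ->
  #|[pred j | P j && (dist a j < kk)]| = \sum_(d < kk) P (nadd a d).
Proof.
move=> Hk. rewrite -sum1_card big_mkcond /= (sum_reindex a) /=.
rewrite -(sum_win_cond (fun d => P (nadd a d)) Hk).
apply: eq_bigr => d _. rewrite inE /= dist_nadd modn_small //.
by case: (P _); case: (d < kk).
Qed.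

Lemma sum_eq1 (j : 'I_n) : \sum_(t : 'I_n) ((t == j) : nat) = 1.
Proof.
rewrite (eq_bigr (fun t => if t == j then 1 else 0)); last by move=> t _; case: (t == j).
by rewrite -big_mkcond big_pred1_eq.
Qed.

End Win.

Section Cover.
Variables (m n : nat) (l : 'I_m -> 'I_n) (k : 'I_m -> nat).
Hypothesis Hk : forall i, 2 <= k i <= n.-1.
Variable c : seq (arcT m n).
Hypothesis Hc : is_circuit l k c.
Hypothesis Hnodigon : forall j, ~~ (circ c j && cross c j).

Local Notation atl := (atail l).
Local Notation ahd := (ahead l k).
Local Notation ess := (essential l c).

Definition rj (e : arcT m n) (t : 'I_n) : bool := if e is inl i then jumps l k i t else false.
Definition R (t : 'I_n) : nat := count (rj ^~ t) c.

Lemma kltn i : k i < n.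
Proof. have := Hk i; have := ngt0 (l i); lia. Qed.

Lemma jumpsE i t : jumps l k i t = (dist (l i) t < k i).
Proof. by rewrite /jumps cint_coE // kltn. Qed.

Lemma atl_row i t : (atl (inl i) == t) = (dist (l i) t == n.-1).
Proof.
have H := ngt0 (l i).
by rewrite /= npredE eq_sym dist_naddE //; lia.
Qed.

Lemma ahd_row i t : (ahd (inl i) == t) = (dist (l i) t == (k i).-1).
Proof.
have H := ngt0 (l i); have := Hk i => Hki.
rewrite /= npredE naddA.
have -> : k i + n.-1 = (k i).-1 + n by lia.
rewrite -nadd_mod modnDr nadd_mod eq_sym dist_naddE //; lia.
Qed.

Lemma row_ident e t :
  rj e (nsucc t) + (is_row e && (ahd e == t)) = rj e t + (is_row e && (atl e == t)) :> nat.
Proof.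
case: e => [i|[j|j]] //=.
rewrite !jumpsE atl_row ahd_row dist_succ.
have H := ngt0 (l i); have := Hk i => Hki; have := kltn i => Hkn.
have := dist_lt (l i) t.
case: (ltnP (dist (l i) t).+1 n) => H1 H2.
- rewrite modn_small //.
  case: (eqVneq (dist (l i) t) (k i).-1) => E1; rewrite ?E1.
  + have -> : ((k i).-1 == n.-1) = false by apply/eqP; lia.
    have -> : (k i).-1 < k i by lia.
    have -> : ((k i).-1.+1 < k i) = false by lia.
    by [].
  + have -> : (dist (l i) t == n.-1) = false by apply/eqP; lia.
    have -> : ((dist (l i) t).+1 < k i) = (dist (l i) t < k i).
      apply/idP/idP; lia.
    by rewrite /= addn0.
- have E : (dist (l i) t).+1 = n by lia.
  rewrite E modnn.
  have -> : dist (l i) t = n.-1 by lia.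
  rewrite eqxx.
  have -> : (n.-1 == (k i).-1) = false by apply/eqP; lia.
  have -> : (0 < k i) by lia.
  have -> : (n <= k i) = false by lia.
  by [].
Qed.

Lemma RI t : R (nsucc t) + rowhead l k c t = R t + rowtail l c t.
Proof. exact: count_add2eq (row_ident ^~ t). Qed.

Lemma Kconst t : R (nsucc t) + circ c (nsucc t) + cross c t = R t + circ c t + cross c (nsucc t).
Proof.
have := RI t; have := T1 Hc Hnodigon t; have := T2 Hc Hnodigon t. lia.
Qed.

Lemma Kconst_all a d : R (nadd a d) + circ c (nadd a d) + cross c a = R a + circ c a + cross c (nadd a d).
Proof.
elim: d => [|d IH]; first by rewrite nadd0.
have E : nadd a d.+1 = nsucc (nadd a d) by rewrite nsuccE naddA addn1.
rewrite E. have := Kconst (nadd a d). lia.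
Qed.

Definition plen (e : arcT m n) : nat :=
  match e with inl i => k i | inr (inl _) => 1 | inr (inr _) => 0 end.
Definition nlen (e : arcT m n) : nat :=
  match e with inr (inr _) => 1 | _ => 0 end.

Lemma sum_alen : (\sum_(e <- c) alen k e = (\sum_(e <- c) plen e)%:Z - (\sum_(e <- c) nlen e)%:Z)%R.
Proof.
elim: c => [|e s IH]; first by rewrite !big_nil.
rewrite !big_cons IH. case: e => [i|[j|j]] /=; lia.
Qed.

Lemma sumK : \sum_(t : 'I_n) (R t + circ c t) = \sum_(e <- c) plen e.
Proof.
rewrite (eq_bigr (fun t => \sum_(e <- c) (rj e t + (e == fwdA m t) : nat))); last first.
  move=> t _. rewrite /R /circ -(count_mem1 Hc) !count_sumE -big_split /=.
  by apply: eq_bigr => e _.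
rewrite exchange_big /=. apply: eq_bigr => e _.
rewrite big_split /=.
case: e => [i|[j|j]] /=.
- have H := ngt0 (l i).
  rewrite [X in _ + X = _]big1 ?addn0 //.
  rewrite (eq_bigr (fun t => (dist (l i) t < k i) : nat)); last by move=> t _; rewrite jumpsE.
  rewrite (sum_reindex (l i)).
  rewrite (eq_bigr (fun d : 'I_n => (d < k i) : nat)); last first.
    by move=> d _ /=; rewrite dist_nadd modn_small.
  by rewrite sum_lt_const; last by have := kltn i; lia.
- rewrite big1 ?add0n //.
  rewrite (eq_bigr (fun t => (t == j) : nat)); first exact: sum_eq1.
  move=> t _. rewrite /fwdA. by case: (t =P j) => [->|H]; rewrite ?eqxx //; case: eqP => // -[] /esym.
- rewrite !big1 //. 
Qed.

Lemma sumX : \sum_(t : 'I_n) (cross c t : nat) = \sum_(e <- c) nlen e.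
Proof.
rewrite (eq_bigr (fun t => \sum_(e <- c) ((e == revA m t) : nat))); last first.
  move=> t _. by rewrite /cross -(count_mem1 Hc) !count_sumE.
rewrite exchange_big /=. apply: eq_bigr => e _.
case: e => [i|[j|j]] /=.
- by rewrite big1.
- by rewrite big1.
- rewrite (eq_bigr (fun t => (t == j) : nat)); first exact: sum_eq1.
  move=> t _. rewrite /revA. by case: (t =P j) => [->|H]; rewrite ?eqxx //; case: eqP => // -[] /esym.
Qed.

Lemma cover_lemma (p : int) (Hp : (p * Posz n = \sum_(e <- c) alen k e)%R) t :
  ((R t)%:Z + (circ c t)%:Z - (cross c t)%:Z = p)%R.
Proof.
have Hn := ngt0 t.
have S : \sum_(t' : 'I_n) (R t' + circ c t' + cross c t) =
         \sum_(t' : 'I_n) (R t + circ c t + cross c t').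
  apply: eq_bigr => t' _. rewrite -(nadd_dist t t'). exact: Kconst_all.
rewrite big_split /= sumK sum_nat_const card_ord big_split /= sum_nat_const card_ord sumX in S.
rewrite sum_alen in Hp.
move: S Hp. rewrite /iter_addn_0 /=.
set P := \sum_(e <- c) plen e. set Q := \sum_(e <- c) nlen e.
move=> S Hp.
have E : (p * n = ((R t)%:Z + (circ c t)%:Z - (cross c t)%:Z) * n)%R by lia.
apply/esym/(mulIf _ E). lia.
Qed.

End Cover.

Lemma count_add_in (T : eqType) (P P1 P2 : pred T) (s : seq T) :
  {in s, forall x, P x = P1 x + P2 x :> nat} ->
  count P s = count P1 s + count P2 s.
Proof.
elim: s => //= x s IH H.
rewrite H ?mem_head // IH; first lia.
by move=> y Hy; apply: H; rewrite inE Hy orbT.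
Qed.

Lemma sum_eqd (K dd : nat) : \sum_(d < K) ((dd == d) : nat) = (dd < K).
Proof.
elim: K => [|K IH]; first by rewrite big_ord0.
rewrite big_ord_recr /= IH ltnS leq_eqVlt.
case: (ltngtP dd K) => //=; lia.
Qed.

Lemma arith_tw n a b K : 0 < n -> 2 <= K <= n.-1 -> a < n -> b < n ->
  (b = a + n.-1 \/ b + n = a + n.-1) ->
  (b < K) = (0 < a < K) + (b == K.-1) :> nat.
Proof.
move=> Hn HK Ha Hb T.
case: (ltnP b K) => ?; case: (ltnP 0 a) => ?; case: (ltnP a K) => ?; case: eqP => ? /=; lia.
Qed.

Lemma arith_D (D T rty cs_y cr_y c_y crs_y rhy N Ry : nat) (p : int) :
  cs_y + (T + rty) = D + 0 -> N = cs_y + cr_y + rty -> N = c_y + crs_y + rhy ->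
  (Ry%:Z + c_y%:Z - cr_y%:Z = p)%R -> Ry = 1 + T -> N <= 1 -> 0 < rhy -> Posz D = p.
Proof. move=> *; lia. Qed.

Section Main.
Variables (m n : nat) (A : 'M[nat]_(m, n)) (l : 'I_m -> 'I_n) (k : 'I_m -> nat).
Hypothesis Hk : forall i, 2 <= k i <= n.-1.
Hypothesis HA : forall i j, A i j = nat_of_bool (cint_co (l i) (nadd (l i) (k i)) j).
Hypothesis Hnodom : forall i i', i != i' -> ~ dominates A i i'.
Variable c : seq (arcT m n).
Hypothesis Hc : is_circuit l k c.
Hypothesis Hnodigon : forall j, ~~ (circ c j && cross c j).

Local Notation atl := (atail l).
Local Notation ahd := (ahead l k).
Local Notation ess := (essential l c).

Lemma nocontain i i' : i != i' -> ~ (forall j, jumps l k i' j -> jumps l k i j).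
Proof.
move=> Hii H; apply: (Hnodom Hii) => j; rewrite !HA.
have := H j; rewrite /jumps. by case: (cint_co _ _ j); case: (cint_co _ _ j) => // ->.
Qed.

Lemma tails_inj : {in c &, injective atl}.
Proof.
have U := uniq_tails Hc. move: U.
elim: c => //= e0 s IH /andP [Hn U] e f.
rewrite !inE => /orP [/eqP ->|He] /orP [/eqP ->|Hf] //.
- move=> E; exfalso; move/negP: Hn; apply; by rewrite E map_f.
- move=> E; exfalso; move/negP: Hn; apply; by rewrite -E map_f.
- exact: IH.
Qed.

Definition tailin (i : 'I_m) (f : arcT m n) : bool :=
  if f is inl i' then (0 < dist (l i) (l i') < k i) else false.

Lemma RyE i : inl i \in c ->
  R l k c (ahd (inl i)) = 1 + count (tailin i) c.
Proof.
move=> Hi. rewrite /R.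
rewrite (count_add_in (P1 := pred1 (inl i)) (P2 := tailin i)); last first.
  move=> f Hf. case: f Hf => [i'|[j|j]] Hf //=.
  have Hn := ngt0 (l i); have Hki := Hk i; have Hki' := Hk i'.
  have Hkn := kltn Hk Hc i; have Hkn' := kltn Hk Hc i'.
  have Dy : dist (l i) (ahd (inl i)) = (k i).-1 by apply/eqP; rewrite -(ahd_row Hk Hc).
  rewrite (jumpsE Hk Hc).
  case: (eqVneq i' i) => [->|Hne].
    rewrite eqxx Dy dist_aa /=. lia.
  have -> : (inl i' == inl i :> arcT m n) = false by apply/eqP => -[]; apply/eqP.
  set a := dist (l i) (l i').
  have Ha := dist_lt (l i) (l i').
  have Hd' := dist_lt (l i') (ahd (inl i)).
  have T1 := dist_tri2 (l i) (l i') (ahd (inl i)). rewrite Dy -/a in T1.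
  case: (ltnP (dist (l i') (ahd (inl i))) (k i')) => Hj /=.
  -
    case: (posnP a) => Ha0.
      exfalso. have E : l i' = l i by rewrite -(nadd_dist (l i) (l i')) -/a Ha0 nadd0.
      have : atl (inl i') = atl (inl i) by rewrite /= E.
      move/(tails_inj Hf Hi) => -[] /eqP; by rewrite (negbTE Hne).
    case: (ltnP a (k i)) => Hak; first by [].
    exfalso. apply: (nocontain Hne) => j. rewrite !(jumpsE Hk Hc).
    have := dist_tri2 (l i) (l i') j. rewrite -/a => T2.
    have := dist_lt (l i') j. have := dist_lt (l i) j. lia.
  - case: (posnP a) => Ha0 /=; first by [].
    case: (ltnP a (k i)) => Hak /=; last by [].
    exfalso. apply: (nocontain (negbT (introF eqP (fun E => (negP Hne) (introT eqP (esym E)))))) => j.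
    rewrite !(jumpsE Hk Hc).
    have := dist_tri2 (l i) (l i') j. rewrite -/a => T2.
    have := dist_lt (l i') j. have := dist_lt (l i) j. lia.
by rewrite (count_mem1 Hc) Hi.
Qed.


Lemma sum_rowtail_win a K : K <= n ->
  \sum_(d < K) rowtail l c (nadd a d) = count (fun f => is_row f && (dist a (atl f) < K)) c.
Proof.
move=> HK. rewrite /rowtail.
rewrite (eq_bigr (fun d : 'I_K => \sum_(f <- c) ((is_row f && (atl f == nadd a d)) : nat))); last first.
  by move=> d _; rewrite count_sumE.
rewrite exchange_big count_sumE /=. apply: eq_bigr => f _.
case: (is_row f) => /=; last by rewrite big1.
rewrite -(sum_eqd K (dist a (atl f))). apply: eq_bigr => d _.
rewrite dist_naddE //. have := ltn_ord d. lia.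
Qed.

Lemma pos_count (P : pred (arcT m n)) e : e \in c -> P e -> 0 < count P c.
Proof. move=> He HP. rewrite -has_count. by apply/hasP; exists e. Qed.

Lemma Nd_le1 t : Nd l c t <= 1.
Proof. by case: (Nd l c t). Qed.

Lemma Dp (p : int) (Hp : (p * Posz n = \sum_(e <- c) alen k e)%R) i : inl i \in c ->
  Posz #|[pred j | ess j && jumps l k i j]| = p.
Proof.
move=> Hi.
have Hn := ngt0 (l i); have Hki := Hk i; have Hkn := kltn Hk Hc i.
rewrite (eq_card (B := [pred j | ess j && (dist (l i) j < k i)])); last first.
  by move=> j; rewrite !inE (jumpsE Hk Hc).
rewrite card_win; last lia.
have TE := tele (T1 Hc Hnodigon) (l i) (k i).
have Ex : nsucc (npred (l i)) = l i by exact: nsucc_pred.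
have Ey : nsucc (npred (nadd (l i) (k i))) = nadd (l i) (k i) by exact: nsucc_pred.
set x := npred (l i). set y := npred (nadd (l i) (k i)).
rewrite -{1}Ey in TE.
have Hrtx : 0 < rowtail l c x by apply: (pos_count (e := inl i)) => //=; rewrite eqxx.
have Hrhy : 0 < rowhead l k c y by apply: (pos_count (e := inl i)) => //=; rewrite eqxx.
have BTx := balT Hc x. have BHy := balH Hc y. have BTy := balT Hc y.
have N1x := Nd_le1 x. have N1y := Nd_le1 y.
rewrite (sum_rowtail_win _ (ltnW Hkn)) in TE.
have Cnt : count (fun f => is_row f && (dist (l i) (atl f) < k i)) c =
           count (tailin i) c + rowtail l c y.
  rewrite /rowtail. apply: count_add_in => f Hf.
  case: f Hf => [i'|[j|j]] Hf; [|by []|by []].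
  change ((dist (l i) (npred (l i')) < k i) = (0 < dist (l i) (l i') < k i) + (npred (l i') == y) :> nat).
  rewrite npredE.
  have -> : (nadd (l i') n.-1 == y) = (dist (l i) (nadd (l i') n.-1) == (k i).-1).
    by rewrite eq_sym (ahd_row Hk Hc).
  have T := dist_tri2 (l i) (l i') (nadd (l i') n.-1).
  have Hn1 : n.-1 < n by rewrite ltn_predL.
  rewrite dist_nadd (modn_small Hn1) in T.
  have := dist_lt (l i) (nadd (l i') n.-1).
  have := dist_lt (l i) (l i').
  move: T Hn Hki.
  move: (dist (l i) (l i')) (dist (l i) (nadd (l i') n.-1)) (k i) => a b K.
  clear. move=> T Hn HK H1 H2. exact: (arith_tw Hn HK H1 H2 T).
have RY := RyE Hi. change (R l k c y = 1 + count (tailin i) c) in RY.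
rewrite -/y in TE.
have CV := cover_lemma Hk Hc Hnodigon Hp y.
have CircL : circ c (l i) = false.
  rewrite -Ex. move: BTx; case: (circ c (nsucc x)) => //=; lia.
rewrite CircL in TE.
rewrite Cnt in TE.
exact: (arith_D TE BTy BHy CV RY N1y Hrhy).
Qed.

End Main.

Lemma nth_filter_iota (F : pred nat) N q : q < N -> F q ->
  nth 0 (filter F (iota 0 N)) (count F (iota 0 q)) = q.
Proof.
move=> Hq Fq.
have -> : N = q + (1 + (N - q.+1)) by lia.
rewrite iotaD filter_cat nth_cat size_filter ltnn subnn iotaD /= add0n Fq /=.
by [].
Qed.

Lemma filter_nth_iota (F : pred nat) N t : t < count F (iota 0 N) ->
  let q := nth 0 (filter F (iota 0 N)) t in [/\ q < N, F q & count F (iota 0 q) = t].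
Proof.
elim: N t => [|N IH] t; first by [].
rewrite -[N.+1]addn1 iotaD count_cat filter_cat /= add0n addn0.
case FN: (F N) => /=.
- rewrite nth_cat size_filter.
  case: (ltnP t (count F (iota 0 N))) => Ht.
    move=> _. have [H1 H2 H3] := IH t Ht. split => //; lia.
  move=> Ht2. have E : t = count F (iota 0 N) by lia.
  rewrite E subnn /=. split => //; lia.
- rewrite cats0 addn0 => Ht. have [H1 H2 H3] := IH t Ht. split => //; lia.
Qed.

Lemma find_iota (P : pred nat) N j : j < N -> P j -> (forall u, u < j -> ~~ P u) ->
  find P (iota 0 N) = j.
Proof.
move=> Hj Pj Hu.
have -> : N = j + (1 + (N - j.+1)) by lia.
rewrite iotaD find_cat.
have -> : has P (iota 0 j) = false.
  apply/hasP => -[u]; rewrite mem_iota => /andP [_ Hu'] Pu.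
  by move: (Hu u Hu'); rewrite Pu.
by rewrite size_iota iotaD /= add0n Pj addn0.
Qed.

Section Per.
Variable n : nat.
Variable F : pred nat.
Hypothesis HF : forall q, F (q + n) = F q.

Lemma count_shift a : count F (iota a n) = count F (iota 0 n).
Proof.
elim: a => // a IH.
rewrite -IH.
case En: n => [|n']; first by [].
have E1 : iota a n'.+1 = a :: iota a.+1 n' by [].
have E2 : iota a.+1 n'.+1 = iota a.+1 n' ++ [:: a + n].
  rewrite -[n'.+1]addn1 iotaD. congr (_ ++ [:: _]). lia.
rewrite E1 E2 count_cat /= HF. lia.
Qed.

Lemma count_per a j : count F (iota 0 (a + j * n)) = count F (iota 0 a) + j * count F (iota 0 n).
Proof.
elim: j => [|j IH]; first by rewrite !mul0n !addn0.
rewrite mulSn.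
have -> : a + (n + j * n) = (a + j * n) + n by lia.
by rewrite iotaD count_cat IH count_shift mulSn; lia.
Qed.

End Per.

Section Blk.
Variables (m n : nat) (l : 'I_m -> 'I_n) (c : seq (arcT m n)).
Variable Hn : 0 < n.
Local Notation ess := (essential l c).

Definition w0 : 'I_n := Ordinal Hn.
Definition w : 'I_n := nsucc w0.

Lemma enum_rot : rot 1 (enum 'I_n) = map (nadd w) (iota 0 n).
Proof.
apply: (inj_map val_inj). rewrite map_rot val_enum_ord -map_comp.
have Hw : forall q, val (nadd w q) = (q + 1) %% n.
  move=> q. by rewrite /= modnDml add0n addnC.
rewrite (eq_map (g := fun q => (q + 1) %% n)); last by move=> q; exact: Hw.
clear Hw. have [n' En] : exists n', n = n'.+1 by exists n.-1; lia.
rewrite En.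
have L : rot 1 (iota 0 n'.+1) = iota 1 n' ++ [:: 0] by rewrite /= rot1_cons cats1.
have I : iota 0 n'.+1 = iota 0 n' ++ [:: n'] by rewrite -addn1 iotaD.
rewrite L I map_cat /= addn1 modnn. congr (_ ++ _).
rewrite (iotaDl 1 0).
apply/eq_in_map => q; rewrite mem_iota => /andP [_ Hq].
rewrite modn_small; lia.
Qed.

Definition F (q : nat) : bool := ess (nadd w q).

Lemma HF q : F (q + n) = F q.
Proof. by rewrite /F -nadd_mod modnDr nadd_mod. Qed.

Lemma ebulE : ebul l c = map (nadd w) (filter F (iota 0 n)).
Proof. by rewrite /ebul enum_rot filter_map. Qed.

Lemma nbulE : nbul l c = count F (iota 0 n).
Proof. by rewrite /nbul ebulE size_map size_filter. Qed.

Definition pos (t : 'I_n) : nat := dist w t.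
Definition idx (t : 'I_n) : nat := count F (iota 0 (pos t)).
Definition cnt (t : 'I_n) : nat := count F (iota 0 (pos t).+1).

Lemma pos_lt t : pos t < n. Proof. exact: dist_lt. Qed.
Lemma F_pos t : F (pos t) = ess t. Proof. by rewrite /F /pos nadd_dist. Qed.

Lemma cntE t : cnt t = idx t + ess t.
Proof. by rewrite /cnt -addn1 iotaD count_cat /= F_pos addn0. Qed.

Lemma idx_lt b : ess b -> idx b < nbul l c.
Proof.
move=> Hb. rewrite nbulE /idx.
have := pos_lt b => Hp.
have -> : n = pos b + (1 + (n - (pos b).+1)) by lia.
rewrite iotaD count_cat iotaD /= F_pos Hb. lia.
Qed.

Lemma nth_ebul_idx x0 b : ess b -> nth x0 (ebul l c) (idx b) = b.
Proof.
move=> Hb. rewrite ebulE (nth_map 0).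
  by rewrite nth_filter_iota ?pos_lt ?F_pos // /pos nadd_dist.
by rewrite size_filter -nbulE idx_lt.
Qed.

Lemma nth_ebul x0 t : t < nbul l c -> exists b, [/\ ess b, idx b = t & nth x0 (ebul l c) t = b].
Proof.
move=> Ht. have := Ht. rewrite nbulE => Ht'.
have [H1 H2 H3] := filter_nth_iota Ht'.
set q := nth 0 _ t in H1 H2 H3.
exists (nadd w q).
have Pq : pos (nadd w q) = q by rewrite /pos dist_nadd modn_small.
split.
- by rewrite -F_pos Pq.
- by rewrite /idx Pq.
- by rewrite ebulE (nth_map 0) // size_filter.
Qed.

Definition win (t : 'I_n) (d : nat) : nat := count (fun u => ess (nadd t u)) (iota 1 d).

Lemma Wlem t d : cnt (nadd t d) + ((pos t + d) %/ n) * nbul l c = cnt t + win t d.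
Proof.
have Ew : win t d = count F (iota (pos t).+1 d).
  rewrite /win -[(pos t).+1]addn1 (iotaDl (pos t) 1) count_map. apply: eq_count => u /=.
  by rewrite /F -naddA /pos nadd_dist.
have Pp : pos (nadd t d) = (pos t + d) %% n.
  by rewrite /pos -{1}(nadd_dist w t) naddA dist_nadd.
rewrite Ew /cnt -count_cat -iotaD Pp nbulE.
rewrite -(count_per HF). congr (count F (iota 0 _)).
have := divn_eq (pos t + d) n. lia.
Qed.

Lemma win0 t d : (forall u, 0 < u <= d -> ~~ ess (nadd t u)) -> win t d = 0.
Proof.
move=> H. apply/eqP. rewrite -leqn0 leqNgt -has_count. apply/hasP => -[u].
rewrite mem_iota => /andP [H1 H2] /=. apply/negP. apply: H. lia.
Qed.

End Blk.

Section Fin.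
Variables (m n : nat) (A : 'M[nat]_(m, n)) (l : 'I_m -> 'I_n) (k : 'I_m -> nat).
Hypothesis Hk : forall i, 2 <= k i <= n.-1.
Hypothesis HA : forall i j, A i j = nat_of_bool (cint_co (l i) (nadd (l i) (k i)) j).
Hypothesis Hnodom : forall i i', i != i' -> ~ dominates A i i'.
Variable c : seq (arcT m n).
Hypothesis Hc : is_circuit l k c.
Hypothesis Hnodigon : forall j, ~~ (circ c j && cross c j).

Local Notation atl := (atail l).
Local Notation ahd := (ahead l k).
Local Notation ess := (essential l c).

Lemma sum_ess : \sum_(t : 'I_n) (ess t : nat) = nbul l c.
Proof.
have P : perm_eq (rot 1 (enum 'I_n)) (enum 'I_n) by rewrite perm_rot.
rewrite /nbul /ebul size_filter (permP P) count_sumE.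
by rewrite big_enum /=.
Qed.

Lemma sum_rowtail : \sum_(t : 'I_n) rowtail l c t = count (@is_row m n) c.
Proof.
rewrite /rowtail.
rewrite (eq_bigr (fun t => \sum_(f <- c) ((is_row f && (atl f == t)) : nat))); last first.
  by move=> t _; rewrite count_sumE.
rewrite exchange_big count_sumE /=. apply: eq_bigr => f _.
case: (is_row f) => /=; last by rewrite big1.
rewrite (eq_bigr (fun t => (t == atl f) : nat)); first exact: sum_eq1.
by move=> t _; rewrite eq_sym.
Qed.

Lemma rows_nbul (a : 'I_n) : count (@is_row m n) c = nbul l c.
Proof.
have TE := tele (T1 Hc Hnodigon) a n.
rewrite naddn in TE.
rewrite -sum_rowtail -sum_ess (sum_reindex a) (sum_reindex a (fun t => ess t : nat)).
move: TE. lia.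
Qed.

End Fin.

Section Gen.
Variable n : nat.

Lemma owner (E : pred 'I_n) (x b0 : 'I_n) : E b0 ->
  exists b r, [/\ r < n, E b, nadd b r = x & forall u, 0 < u <= r -> ~~ E (nadd b u)].
Proof.
move=> Eb0.
have Hn := ngt0 x.
have exP : exists r, (r < n) && E (nadd x (n - r)).
  exists (dist b0 x). rewrite dist_lt /=.
  rewrite -{1}(nadd_dist b0 x) naddA.
  have -> : dist b0 x + (n - dist b0 x) = n by have := dist_lt b0 x; lia.
  by rewrite naddn.
case: (ex_minnP exP) => r /andP [Hr Eb] Hmin.
exists (nadd x (n - r)), r. split => //.
- rewrite naddA. have -> : n - r + r = n by lia. by rewrite naddn.
- move=> u Hu. apply/negP => Eu.
  have : (r - u < n) && E (nadd x (n - (r - u))).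
    rewrite naddA in Eu. have -> : n - (r - u) = n - r + u by lia.
    rewrite Eu andbT. lia.
  move/Hmin. lia.
Qed.

Lemma run_in (E f : pred 'I_n) (z : 'I_n -> nat) b r :
  (forall t, f (nsucc t) + z t = E t + f t :> nat) ->
  (forall u, 0 < u <= r -> ~~ E (nadd b u)) ->
  0 < z (nadd b r) -> ~~ f (nsucc (nadd b r)) ->
  forall u, 0 < u <= r -> f (nadd b u).
Proof.
move=> T HE Hz Hf.
suff H : forall j, j < r -> f (nadd b (r - j)).
  move=> u Hu. have := H (r - u). have -> : r - (r - u) = u by lia. apply. lia.
elim=> [|j IH] Hj.
- rewrite subn0. have := T (nadd b r). have := HE r. move: Hf.
  case: (f (nsucc (nadd b r))) => //= _.
  case: (E (nadd b r)) => /=; first by move=> H; suff: false by []; apply: H; rewrite Hj leqnn.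
  case: (f (nadd b r)) => //= _. lia.
- have Ht := T (nadd b (r - j.+1)).
  have E1 : nsucc (nadd b (r - j.+1)) = nadd b (r - j).
    rewrite nsuccE naddA. congr nadd. lia.
  rewrite E1 IH in Ht; last lia.
  have := HE (r - j.+1). move: Ht.
  case: (E (nadd b (r - j.+1))) => /=; first by move=> _ H; suff: false by []; apply: H; apply/andP; split; lia.
  case: (f (nadd b (r - j.+1))) => //= _; lia.
Qed.

Lemma run_end_eq (f : pred 'I_n) b r : 0 < r -> r < n ->
  (forall u, 0 < u <= r -> f (nadd b u)) -> ~~ f (nsucc (nadd b r)) ->
  run_end f b = nadd b r.
Proof.
move=> Hr Hrn Hin Hf. rewrite /run_end.
rewrite (find_iota (j := r.-1)).
- congr nadd. lia.
- lia.
- have -> : r.-1.+2 = r.+1 by lia.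
  by rewrite -addn1 -naddA.
- move=> u Hu. rewrite negbK. apply: Hin. lia.
Qed.

End Gen.

Lemma mod_arith (a a' D s q1 q2 q3 : nat) : a' < s ->
  a' + q1 * s + q2 * s = a + D + q3 * s -> a' = (a + D) %% s.
Proof.
move=> Ha E.
have : (a' + (q1 + q2) * s) %% s = (a + D + q3 * s) %% s by rewrite mulnDl addnA E.
rewrite [a' + _]addnC [a + D + _]addnC !modnMDl modn_small //.
Qed.

Section Blocks.
Variables (m n : nat) (A : 'M[nat]_(m, n)) (l : 'I_m -> 'I_n) (k : 'I_m -> nat).
Hypothesis Hk : forall i, 2 <= k i <= n.-1.
Hypothesis HA : forall i j, A i j = nat_of_bool (cint_co (l i) (nadd (l i) (k i)) j).
Hypothesis Hnodom : forall i i', i != i' -> ~ dominates A i i'.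
Variable c : seq (arcT m n).
Hypothesis Hc : is_circuit l k c.
Hypothesis Hnodigon : forall j, ~~ (circ c j && cross c j).

Local Notation atl := (atail l).
Local Notation ahd := (ahead l k).
Local Notation ess := (essential l c).

Lemma winD (Hn : 0 < n) i :
  win l c (npred (l i)) (k i) = #|[pred j | ess j && jumps l k i j]|.
Proof.
rewrite (eq_card (B := [pred j | ess j && (dist (l i) j < k i)])); last first.
  by move=> j; rewrite !inE (jumpsE Hk Hc).
rewrite card_win; last by have := kltn Hk Hc i; lia.
rewrite /win (iotaDl 1 0) count_map count_sumE.
rewrite -(subn0 (k i)) -/(index_iota 0 (k i - 0)) big_mkord subn0.
apply: eq_bigr => d _ /=.
by rewrite -naddA -nsuccE nsucc_pred.
Qed.

Lemma blocks i : inl i \in c ->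
  exists t, [/\ t < nbul l c,
    atl (inl i) = Bminus c (nth (l i) (ebul l c) t) &
    ahd (inl i) = Bplus c (nth (l i) (ebul l c)
                 ((t + #|[pred j | ess j && jumps l k i j]|) %% nbul l c))].
Proof.
move=> Hi.
have Hn := ngt0 (l i).
have Hs : 0 < nbul l c.
  rewrite -(rows_nbul Hc Hnodigon (l i)). exact: (pos_count (e := inl i)).
have [b0 [Eb0 _ _]] := nth_ebul Hn (l i) Hs.
have Ex : atl (inl i) = npred (l i) by [].
have Ey : ahd (inl i) = npred (nadd (l i) (k i)) by [].
rewrite Ex Ey.
set x := npred (l i). set y := npred (nadd (l i) (k i)).
have [b [r [Hr Eb Ebx Hno]]] := owner x Eb0.
have [b' [r' [Hr' Eb' Eby Hno']]] := owner y Eb0.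
have Hrtx : 0 < rowtail l c x by apply: (pos_count (e := inl i)) => //=; rewrite eqxx.
have Hrhy : 0 < rowhead l k c y by apply: (pos_count (e := inl i)) => //=; rewrite eqxx.
have Ncx : ~~ circ c (nsucc x).
  have := balT Hc x; have := Nd_le1 l c x. move: Hrtx.
  case: (circ c (nsucc x)) => //=; lia.
have Ncy : ~~ cross c (nsucc y).
  have := balH Hc y; have := Nd_le1 l c y. move: Hrhy.
  case: (cross c (nsucc y)) => //=; lia.
have CI := @run_in _ ess (circ c) (rowtail l c) b r (T1 Hc Hnodigon) Hno.
rewrite Ebx in CI. have {}CI := CI Hrtx Ncx.
have XI := @run_in _ ess (cross c) (rowhead l k c) b' r' (T2 Hc Hnodigon) Hno'.
rewrite Eby in XI. have {}XI := XI Hrhy Ncy.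
have BM : Bminus c b = x.
  rewrite /Bminus /blockV. case: (posnP r) => Hr0.
  - rewrite Hr0 nadd0 in Ebx. subst b. by rewrite (negbTE Ncx).
  - have -> : circ c (nsucc b) by rewrite nsuccE; apply: CI; lia.
    rewrite (run_end_eq Hr0 Hr) // -?Ebx //. by rewrite Ebx.
have BP : Bplus c b' = y.
  rewrite /Bplus /blockV. case: (posnP r') => Hr0.
  - rewrite Hr0 nadd0 in Eby. subst b'. rewrite (negbTE Ncy).
    by case: (circ c (nsucc y)).
  - have Cb : cross c (nsucc b') by rewrite nsuccE; apply: XI; lia.
    have -> : circ c (nsucc b') = false.
      by have := Hnodigon (nsucc b'); rewrite Cb andbT => /negbTE.
    rewrite Cb (run_end_eq Hr0 Hr') // -?Eby //. by rewrite Eby.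
exists (idx l c Hn b). split.
- exact: idx_lt.
- by rewrite nth_ebul_idx.
- have W1 := Wlem l c Hn b r. rewrite Ebx (win0 Hn Hno) in W1.
  have W2 := Wlem l c Hn x (k i).
  have Exy : nadd x (k i) = y by rewrite /x /y !npredE !naddA addnC.
  rewrite Exy winD in W2.
  have W3 := Wlem l c Hn b' r'. rewrite Eby (win0 Hn Hno') in W3.
  have C1 := cntE l c Hn b. have C2 := cntE l c Hn b'.
  rewrite Eb in C1. rewrite Eb' in C2.
  suff -> : (idx l c Hn b + #|[pred j | ess j && jumps l k i j]|) %% nbul l c = idx l c Hn b'.
    by rewrite nth_ebul_idx.
  apply/esym.
  apply: (mod_arith (q1 := (pos Hn b + r) %/ n) (q2 := (pos Hn x + k i) %/ n) (q3 := (pos Hn b' + r') %/ n) (idx_lt Hn Eb')).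
  move: W1 W2 W3 C1 C2.
  move: ((pos Hn b + r) %/ n * nbul l c) ((pos Hn x + k i) %/ n * nbul l c) ((pos Hn b' + r') %/ n * nbul l c) => Q1 Q2 Q3.
  lia.
all: try exact Hn.
Qed.

End Blocks.

Lemma modn_dvdD a b g : g %| b -> (a + b) %% g = a %% g.
Proof. move=> H. by rewrite -modnDmr (eqP H) addn0. Qed.

Lemma g12 g : 0 < g -> 1 %% g = 2 %% g -> g = 1.
Proof.
move=> Hg. case: g Hg => // [[|[|g]]] //.
Qed.

Section Gcd.
Variables (m n : nat) (A : 'M[nat]_(m, n)) (l : 'I_m -> 'I_n) (k : 'I_m -> nat).
Hypothesis Hk : forall i, 2 <= k i <= n.-1.
Hypothesis HA : forall i j, A i j = nat_of_bool (cint_co (l i) (nadd (l i) (k i)) j).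
Hypothesis Hnodom : forall i i', i != i' -> ~ dominates A i i'.
Variable c : seq (arcT m n).
Hypothesis Hc : is_circuit l k c.
Hypothesis Hnodigon : forall j, ~~ (circ c j && cross c j).
Variable Hn : 0 < n.

Local Notation atl := (atail l).
Local Notation ahd := (ahead l k).
Local Notation ess := (essential l c).
Local Notation cnt := (cnt l c Hn).

Lemma cnt_short j : ~~ ess j -> cnt j %% nbul l c = cnt (npred j) %% nbul l c.
Proof.
move=> Hj. have W := Wlem l c Hn (npred j) 1.
rewrite -nsuccE nsucc_pred in W.
have Hw : win l c (npred j) 1 = 0.
  by rewrite /win /= -nsuccE nsucc_pred (negbTE Hj).
rewrite Hw addn0 in W. by rewrite -W addnC modnMDl.
Qed.

Variable D : nat.
Hypothesis HD : forall i, inl i \in c -> #|[pred j | ess j && jumps l k i j]| = D.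

Lemma cnt_arc e : e \in c -> cnt (ahd e) %% gcdn (nbul l c) D = cnt (atl e) %% gcdn (nbul l c) D.
Proof.
set g := gcdn _ _.
have Hgs : g %| nbul l c by apply: dvdn_gcdl.
have HgD : g %| D by apply: dvdn_gcdr.
case: e => [i|[j|j]] He.
- have W := Wlem l c Hn (npred (l i)) (k i).
  have Exy : nadd (npred (l i)) (k i) = npred (nadd (l i) (k i)) by rewrite !npredE !naddA addnC.
  rewrite Exy (winD Hk Hc Hn i) HD // in W.
  change (cnt (npred (nadd (l i) (k i))) %% g = cnt (npred (l i)) %% g).
  have HQ : g %| (pos Hn (npred (l i)) + k i) %/ n * nbul l c by apply: dvdn_mull.
  by rewrite -(modn_dvdD _ HQ) W modn_dvdD.
- have Hj : ~~ ess j.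
    rewrite /essential /bullet /circ. by rewrite He.
  change (cnt j %% g = cnt (npred j) %% g).
  by rewrite -(modn_dvdm (cnt j) Hgs) -(modn_dvdm (cnt (npred j)) Hgs) (cnt_short Hj).
- have Hj : ~~ ess j.
    rewrite /essential /bullet /cross. by rewrite He andbF.
  change (cnt (npred j) %% g = cnt j %% g).
  by rewrite -(modn_dvdm (cnt j) Hgs) -(modn_dvdm (cnt (npred j)) Hgs) (cnt_short Hj).
Qed.


Lemma prop_nodes (f : 'I_n -> nat) : (forall e, e \in c -> f (ahd e) = f (atl e)) ->
  forall x y, x \in map atl c -> y \in map atl c -> f x = f y.
Proof.
move=> Hf.
have HR := heads_rot Hc.
have Hne := c_neq0 Hc.
case Ec: c Hne HR Hf => [|e0 c'] // _ HR Hf.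
suff H : forall x, x \in map atl (e0 :: c') -> f x = f (atl e0).
  by move=> x y Hx Hy; rewrite (H x Hx) (H y Hy).
have Hi : forall i, i < size c' -> f (nth (atl e0) (map atl c') i) = f (atl e0).
  elim=> [|i IH] Hi.
  - have := congr1 (fun s => nth (atl e0) s 0) HR.
    rewrite /= rot1_cons nth_rcons size_map Hi => <-.
    apply: Hf. by rewrite mem_head.
  - have := congr1 (fun s => nth (atl e0) s i.+1) HR.
    rewrite /= rot1_cons nth_rcons size_map Hi => <-.
    have Hi' : i < size c' by lia.
    rewrite (nth_map e0) // Hf; last by rewrite inE mem_nth ?orbT.
    by rewrite -(nth_map e0 (atl e0)) // IH.
move=> x. rewrite /= inE => /orP [/eqP -> //|Hx].
rewrite -(nth_index (atl e0) Hx). apply: Hi.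
by rewrite -(size_map atl) index_mem.
Qed.


Lemma gcd_pos : 0 < nbul l c -> gcdn (nbul l c) D = 1.
Proof.
move=> Hs.
case: (ltngtP (nbul l c) 1) => H1; [lia| |by rewrite H1 gcd1n].
set x0 : 'I_n := Ordinal Hn.
have [b1 [E1 I1 _]] := nth_ebul Hn x0 Hs.
have [b2 [E2 I2 _]] := nth_ebul Hn x0 H1.
have PN := prop_nodes (f := fun t => cnt t %% gcdn (nbul l c) D) cnt_arc.
have N1 : b1 \in map atl c by case/andP: E1.
have N2 : b2 \in map atl c by case/andP: E2.
have := PN _ _ N1 N2. rewrite !cntE E1 E2 I1 I2 /=.
apply: g12. by rewrite gcdn_gt0 Hs.
Qed.

End Gcd.

Unset Implicit Arguments.
Set Strict Implicit.

Theorem lemma7p2 (m n : nat) (A : 'M[nat]_(m, n))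
  (l : 'I_m -> 'I_n) (k : 'I_m -> nat)
  (Hk : forall i, 2 <= k i <= n.-1)
  (HA : forall i j, A i j = nat_of_bool (cint_co (l i) (nadd (l i) (k i)) j))
  (Hnodom : forall i i', i != i' -> ~ dominates A i i')
  (c : seq (arcT m n)) (Hc : is_circuit l k c)
  (Hnodigon : forall j, ~~ (circ c j && cross c j))
  (p : int) (Hp : (p * Posz n = \sum_(e <- c) alen k e)%R) :
  count (@is_row m n) c = nbul l c /\
  (forall i, rowA n i \in c ->
     Posz #|[pred j | essential l c j && jumps l k i j]| = p /\
     exists t, t < nbul l c /\
       atail l (rowA n i) = Bminus c (nth (l i) (ebul l c) t) /\
       ahead l k (rowA n i) =
         Bplus c (nth (l i) (ebul l c) `|((Posz t + p) %% Posz (nbul l c))%Z|%N)) /\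
  gcdn (nbul l c) `|p|%N = 1.
Proof.
have Hne := c_neq0 Hc.
have [e0 He0] : exists e0, e0 \in c.
  move: Hne; case: (c) => // e s _; exists e; by rewrite mem_head.
have Hn : 0 < n := ngt0 (atail l e0).
have R1 := rows_nbul Hc Hnodigon (atail l e0).
split; first exact: R1.
have Part2 : forall i, rowA n i \in c ->
     Posz #|[pred j | essential l c j && jumps l k i j]| = p /\
     exists t, t < nbul l c /\
       atail l (rowA n i) = Bminus c (nth (l i) (ebul l c) t) /\
       ahead l k (rowA n i) =
         Bplus c (nth (l i) (ebul l c) `|((Posz t + p) %% Posz (nbul l c))%Z|%N).
  move=> i Hi. have HD := Dp Hk HA Hnodom Hc Hnodigon Hp Hi. split => //.
  have [t [Ht B1 B2]] := blocks Hk Hc Hnodigon Hi. exists t. split=> //; split => //.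
  by rewrite -HD -PoszD modz_nat absz_nat.
split; first exact: Part2.
case: (posnP (nbul l c)) => Hs.
- rewrite Hs gcd0n.
  have Hrow0 : count (@is_row m n) c = 0 by rewrite R1.
  have CV := cover_lemma Hk Hc Hnodigon Hp.
  case: e0 He0 {Hn R1} => [i|[j|j]] He0.
  + exfalso. have := pos_count (P := @is_row m n) He0 isT. by rewrite Hrow0.
  + have := CV j.
    have R0 : R l k c j = 0.
      apply/eqP; rewrite -leqn0 -Hrow0. apply: sub_count => e /=. by case: e.
    have Cj : circ c j by [].
    have Xj : cross c j = false by have := Hnodigon j; rewrite Cj /= => /negbTE.
    rewrite R0 Cj Xj => <-. by [].
  + have := CV j.
    have R0 : R l k c j = 0.
      apply/eqP; rewrite -leqn0 -Hrow0. apply: sub_count => e /=. by case: e.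
    have Xj : cross c j by [].
    have Cj : circ c j = false by have := Hnodigon j; rewrite Xj andbT => /negbTE.
    rewrite R0 Cj Xj => <-. by [].
- have : has (@is_row m n) c by rewrite has_count R1.
  case/hasP => -[i|[j|j]] Hi //= _.
  have HD := Dp Hk HA Hnodom Hc Hnodigon Hp Hi.
  rewrite -HD absz_nat.
  apply: (gcd_pos Hk Hc Hn) => //.
  move=> i' Hi'. have := Dp Hk HA Hnodom Hc Hnodigon Hp Hi'. rewrite -HD. by case.
Qed.
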